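(* Let $m\ge 2$ and consider the memristive Hopfield neural network $$\frac{du_i}{dt}=-a_iu_i+\sum_{j=1}^m w_{ij}f_j(u_j)+k\,\varphi_i(\rho)\,u_i+J_i-P\,u_i\sum_{j=1}^m\Gamma(u_j),\quad 1\le i\le m,\qquad \frac{d\rho}{dt}=\sum_{i=1}^m\gamma_iu_i-b\rho,$$ where $\Gamma(s)=\dfrac{1}{1+\exp[-r(s-V)]}$ with $r>0$, $V\in\mathbb{R}$, $P>0$; $a_i,b,\beta,\eta_i,k>0$; $w_{ij},J_i,\gamma_i\in\mathbb{R}$; $f_i,\varphi_i$ locally Lipschitz with $a_i>k$, $|f_i(s)|\le\beta$, $\varphi_i(s)=1-\eta_is^2$ for all $s\in\mathbb{R}$, $1\le i\le m$. Define $a=\min_ia_i$, $W=\max_{i,j}|w_{ij}|$, $J=\max_i|J_i|$, $\gamma^2=\max_i\gamma_i^2$, $$C_1=\frac{1}{a-k}\Big(\frac{m\gamma^2}{b}+b\Big),\ C_2=\Big(\frac{m\gamma^2}{b}+b\Big)\frac{m(mW\beta+J)^2}{(a-k)^2},\ \mu_0=b\min\Big\{\frac1{C_1},1\Big\},\ Q=1+\frac{C_2}{\mu_0\min\{C_1,1\}},$$ and $a^*=\max_{i,j}|a_i-a_j|$, $W^*=\max_{i,j,\ell}|w_{i\ell}-w_{j\ell}|$, $\eta^*=\max_{i,j}|\eta_i-\eta_j|$, $J^*=\max_{i,j}|J_i-J_j|$. For $\varepsilon>0$ let $$P^*(\varepsilon)=\frac{1}{m\varepsilon}\big(mW^*\beta+a^*Q^{1/2}+k\eta^*Q^{3/2}+J^*\big)\big[1+\exp\{r(\sqrt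 Q+|V|)\}\big].$$ Then for every $\varepsilon>0$, if $P>P^*(\varepsilon)$, the network is approximately synchronized: $$\sup_{g^0\in\mathbb{R}^{m+1}}\ \max_{1\le i<j\le m}\ \limsup_{t\to\infty}|u_i(t)-u_j(t)|<\varepsilon,$$ where $(u_1,\dots,u_m,\rho)$ is the solution with initial state $g^0$, and this convergence occurs at the uniform exponential rate $$\mu(P)=(a-k)+\frac{mP}{1+\exp\{r(\sqrt Q+|V|)\}}>0,$$ in the sense that there is a constant $D<\varepsilon$ (independent of the initial state) such that for every initial state there is $T\ge0$ with $|u_i(t)-u_j(t)|^2\le e^{-\mu(P)(t-T)}|u_i(T)-u_j(T)|^2+D^2$ for all $t>T$ and all $i\ne j$.
   Context: The paper calls a network approximately synchronizable if for every prescribed gap $\varepsilon>0$ there is a threshold on the coupling parameter beyond which the synchronous degree $\sup_{g^0}\max_{i<j}\limsup_{t\to\infty}|u_i(t)-u_j(t)|$ is less than $\varepsilon$; if the limsup convergence admits a uniform exponential rate, it is called approximate exponential synchronization. Solutions exist globally in time for every initial state. *)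

(* Defs.v *)
From Stdlib Require Import Reals Lra List.
From Coquelicot Require Import Coquelicot.
Open Scope R_scope.

Definition maxi (m : nat) (g : nat -> R) : R :=
  fold_right Rmax (g 0%nat) (map g (seq 0 m)).
Definition mini (m : nat) (g : nat -> R) : R :=
  fold_right Rmin (g 0%nat) (map g (seq 0 m)).

Definition locally_lipschitz (f : R -> R) : Prop :=
  forall M : R, exists L : R, forall x y : R,
    Rabs x <= M -> Rabs y <= M -> Rabs (f x - f y) <= L * Rabs (x - y).

Definition sup_from (g : R -> R) (T : R) : Rbar :=
  Lub_Rbar (fun y => exists t, T <= t /\ y = g t).
Definition limsup_infty (g : R -> R) : Rbar :=
  Glb_Rbar (fun z => exists T : R, z = sup_from g T).

Definition Gam (r V s : R) : R := 1 / (1 + exp (- r * (s - V))).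

Definition sumi (m : nat) (g : nat -> R) : R :=
  fold_right Rplus 0 (map g (seq 0 m)).

Definition is_solution (m : nat) (a : nat -> R) (w : nat -> nat -> R)
  (f phi : nat -> R -> R) (k : R) (J : nat -> R) (P r V : R)
  (gam : nat -> R) (b : R) (u : nat -> R -> R) (rho : R -> R) : Prop :=
  forall t : R, 0 < t ->
    (forall i : nat, (i < m)%nat ->
       derivable_pt_lim (u i) t
         (- a i * u i t + sumi m (fun j => w i j * f j (u j t))
          + k * phi i (rho t) * u i t + J i
          - P * u i t * sumi m (fun j => Gam r V (u j t)))) /\
    derivable_pt_lim rho t (sumi m (fun i => gam i * u i t) - b * rho t).

(* Main.v *)
Require Import Defs.
From Stdlib Require Import Reals Lra Lia List.
From Coquelicot Require Import Coquelicot.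
Open Scope R_scope.

Lemma exp_le' x y : x <= y -> exp x <= exp y.
Proof. intros [H|H]; [left; apply exp_increasing; auto | subst; lra]. Qed.

Lemma fold_max_ge (l : list R) d x : In x l -> x <= fold_right Rmax d l.
Proof.
  induction l as [|h l IH]; simpl; [tauto|].
  intros [<-|H]; [apply Rmax_l|]. eapply Rle_trans; [apply IH; auto| apply Rmax_r].
Qed.
Lemma fold_min_le (l : list R) d x : In x l -> fold_right Rmin d l <= x.
Proof.
  induction l as [|h l IH]; simpl; [tauto|].
  intros [<-|H]; [apply Rmin_l|]. eapply Rle_trans; [apply Rmin_r| apply IH; auto].
Qed.
Lemma in_seq0 m i : (i < m)%nat -> In i (seq 0 m).
Proof. intros; apply in_seq; lia. Qed.
Lemma maxi_ge m g i : (i < m)%nat -> g i <= maxi m g.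
Proof. intros; unfold maxi; apply fold_max_ge, in_map, in_seq0; auto. Qed.
Lemma mini_le m g i : (i < m)%nat -> mini m g <= g i.
Proof. intros; unfold mini; apply fold_min_le, in_map, in_seq0; auto. Qed.

Lemma sumi_le m g h : (forall i, (i < m)%nat -> g i <= h i) -> sumi m g <= sumi m h.
Proof.
  unfold sumi. intros H. assert (H' : forall i, In i (seq 0 m) -> g i <= h i)
  by (intros i Hi; apply H; apply in_seq in Hi; lia).
  clear H. induction (seq 0 m) as [|x l IH]; simpl; [lra|].
  apply Rplus_le_compat; [apply H'; simpl; auto| apply IH; intros; apply H'; simpl; auto].
Qed.
Lemma sumi_lin m g c1 c2 : sumi m (fun i => c1 * g i + c2) = c1 * sumi m g + INR m * c2.
Proof.
  unfold sumi. assert (forall l : list nat, fold_right Rplus 0 (map (fun i => c1 * g i + c2) l)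
     = c1 * fold_right Rplus 0 (map g l) + INR (length l) * c2).
  { induction l as [|x l IH]; cbn [length map fold_right]; [simpl; lra|]. rewrite IH, S_INR. lra. }
  rewrite H, length_seq; auto.
Qed.
Lemma sumi_minus m g h : sumi m g - sumi m h = sumi m (fun i => g i - h i).
Proof. unfold sumi. induction (seq 0 m) as [|x l IH]; simpl; lra. Qed.
Lemma sumi_abs m g : Rabs (sumi m g) <= sumi m (fun i => Rabs (g i)).
Proof.
  unfold sumi. induction (seq 0 m) as [|x l IH]; simpl.
  - rewrite Rabs_R0; lra.
  - eapply Rle_trans; [apply Rabs_triang|lra].
Qed.
Lemma sumi_ge_term m g i : (forall j, (j < m)%nat -> 0 <= g j) -> (i < m)%nat -> g i <= sumi m g.
Proof.
  unfold sumi. intros H Hi. assert (H' : forall j, In j (seq 0 m) -> 0 <= g j)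
  by (intros j Hj; apply H; apply in_seq in Hj; lia).
  apply in_seq0 in Hi. clear H. induction (seq 0 m) as [|x l IH]; simpl in *; [tauto|].
  assert (0 <= fold_right Rplus 0 (map g l)).
  { clear -H'. induction l; simpl; [lra|]. assert (0 <= g a) by (apply H'; simpl; auto).
    assert (0 <= fold_right Rplus 0 (map g l)) by (apply IHl; intros; apply H'; simpl in *; tauto). lra. }
  destruct Hi as [<-|Hi]; [lra|]. assert (0 <= g x) by (apply H'; auto).
  assert (g i <= fold_right Rplus 0 (map g l)) by (apply IH; auto; intros; apply H'; auto). lra.
Qed.
Lemma sumi_deriv m (F : nat -> R -> R) (d : nat -> R) t :
  (forall i, (i < m)%nat -> derivable_pt_lim (F i) t (d i)) ->
  derivable_pt_lim (fun s => sumi m (fun i => F i s)) t (sumi m d).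
Proof.
  unfold sumi. intros H. assert (H' : forall i, In i (seq 0 m) -> derivable_pt_lim (F i) t (d i))
  by (intros i Hi; apply H; apply in_seq in Hi; lia).
  clear H. induction (seq 0 m) as [|x l IH]; simpl.
  - apply derivable_pt_lim_const.
  - apply (derivable_pt_lim_plus (F x) (fun s => fold_right Rplus 0 (map (fun i => F i s) l))).
    + apply H'; simpl; auto.
    + apply IH; intros; apply H'; simpl; auto.
Qed.

Lemma sq_deriv f t l : derivable_pt_lim f t l -> derivable_pt_lim (fun s => f s ^ 2) t (2 * f t * l).
Proof.
  intros H. apply is_derive_Reals. apply is_derive_Reals in H.
  replace (2 * f t * l) with (INR 2 * l * f t ^ Init.Nat.pred 2) by (simpl; ring).
  apply is_derive_pow; auto.
Qed.
Lemma sumi_const m c : sumi m (fun _ => c) = INR m * c.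
Proof.
  unfold sumi. assert (forall l : list nat, fold_right Rplus 0 (map (fun _ => c) l) = INR (length l) * c).
  { induction l as [|x l IH]; cbn [length map fold_right]; [simpl; lra|]. rewrite IH, S_INR. lra. }
  rewrite H, length_seq; auto.
Qed.
Lemma sumi_scal m c g : sumi m (fun i => c * g i) = c * sumi m g.
Proof. unfold sumi. induction (seq 0 m) as [|x l IH]; simpl; [ring|]. rewrite IH; ring. Qed.

Lemma exp_lin_deriv α s : derivable_pt_lim (fun s => exp (α * s)) s (α * exp (α * s)).
Proof. apply is_derive_Reals. auto_derive; auto; ring. Qed.

Lemma compare (y y' : R -> R) α c t0 : 0 < α ->
  (forall t, t0 <= t -> derivable_pt_lim y t (y' t)) ->
  (forall t, t0 <= t -> y' t <= - α * y t + c) ->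
  forall t, t0 <= t -> y t <= exp (- α * (t - t0)) * (y t0 - c / α) + c / α.
Proof.
  intros Ha Hd Hb t Ht.
  destruct Ht as [Ht| <-].
  2:{ replace (-α*(t0-t0)) with 0 by ring. rewrite exp_0. lra. }
  set (g := fun s => exp (α * s) * (y s - c / α)).
  set (g' := fun s => α * exp (α * s) * (y s - c / α) + exp (α * s) * y' s).
  destruct (MVT_cor2 g g' t0 t Ht) as [x [Hx Hxr]].
  { intros x Hx. unfold g, g'.
    apply (derivable_pt_lim_mult (fun s => exp (α * s)) (fun s => y s - c / α)).
    - apply exp_lin_deriv.
    - replace (y' x) with (y' x - 0) by ring.
      apply (derivable_pt_lim_minus y (fun _ => c / α)).
      + apply Hd; lra.
      + apply derivable_pt_lim_const. }
  assert (Hg' : g' x <= 0).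
  { unfold g'. pose proof (Hb x ltac:(lra)). pose proof (exp_pos (α * x)).
    replace (α * exp (α * x) * (y x - c / α) + exp (α * x) * y' x)
      with (exp (α * x) * (y' x - (- α * y x + c))) by (field; lra).
    assert (y' x - (- α * y x + c) <= 0) by lra. nra. }
  assert (g t <= g t0) by nra.
  unfold g in H.
  assert (E1 : exp (- α * (t - t0)) * exp (α * t) = exp (α * t0)).
  { rewrite <- exp_plus. f_equal. ring. }
  pose proof (exp_pos (- α * (t - t0))).
  assert (exp (- α * (t - t0)) * (exp (α * t) * (y t - c / α)) <=
          exp (- α * (t - t0)) * (exp (α * t0) * (y t0 - c / α))) by (apply Rmult_le_compat_l; lra).
  replace (exp (- α * (t - t0)) * (exp (α * t) * (y t - c / α))) with (exp (α * t0) * (y t - c/α)) in H1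
   by (rewrite <- E1; ring).
  assert (E2 : exp (- α * (t - t0)) * exp (α * t0) = exp (α * t0) * exp (- α * (t - t0))) by ring.
  pose proof (exp_pos (α * t0)).
  assert (y t - c / α <= exp (- α * (t - t0)) * (y t0 - c / α)).
  { apply (Rmult_le_reg_l (exp (α * t0))); auto. nra. }
  lra.
Qed.

Lemma eventually_small α A δ : 0 < α -> 0 <= A -> 0 < δ ->
  exists T0, 0 <= T0 /\ forall s, T0 <= s -> exp (- α * s) * A <= δ.
Proof.
  intros Ha HA Hd. exists (ln (A / δ + 1) / α). split.
  - apply Rdiv_le_0_compat; auto. rewrite <- ln_1. apply ln_le; try lra.
    assert (0 <= A / δ) by (apply Rdiv_le_0_compat; lra). lra.
  - intros s Hs. assert (0 <= A / δ) by (apply Rdiv_le_0_compat; lra).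
    assert (exp (- α * s) <= / (A / δ + 1)).
    { rewrite <- exp_ln with (x := / (A/δ+1)) by (apply Rinv_0_lt_compat; lra).
      apply exp_le'. rewrite ln_Rinv by lra.
      assert (ln (A / δ + 1) <= α * s).
      { apply (Rmult_le_compat_l α) in Hs; try lra. unfold Rdiv in Hs. rewrite <- Rmult_assoc, (Rmult_comm α), Rmult_assoc, Rinv_r, Rmult_1_r in Hs; lra. }
      lra. }
    pose proof (exp_pos (- α * s)).
    apply Rle_trans with (/ (A / δ + 1) * A); [apply Rmult_le_compat_r; auto|].
    apply (Rmult_le_reg_l (A / δ + 1)); [lra|]. rewrite <- Rmult_assoc, Rinv_r by lra.
    unfold Rdiv. rewrite Rmult_plus_distr_r, Rmult_assoc, Rinv_l by lra. lra.
Qed.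



Lemma amgm x K α : 0 < α -> 2 * x * K <= α * x ^ 2 + K ^ 2 / α.
Proof.
  intros Ha. assert (0 <= (α * x - K) ^ 2 / α) by (apply Rdiv_le_0_compat; [apply pow2_ge_0|lra]).
  replace ((α * x - K) ^ 2 / α) with (α * x ^ 2 - 2 * x * K + K ^ 2 / α) in H by (field; lra). lra.
Qed.

Lemma abs_sq x : Rabs x ^ 2 = x ^ 2.
Proof. rewrite RPow_abs, Rabs_right; auto. apply Rle_ge; apply pow2_ge_0. Qed.

Lemma uterm ai amin k eta rho u Sw Ji P S α Ku :
  amin <= ai -> 0 < k -> 0 <= eta -> 0 <= P -> 0 <= S -> Rabs Sw + Rabs Ji <= Ku ->
  α = amin - k -> 0 < α ->
  2 * u * (- ai * u + Sw + k * (1 - eta * rho ^ 2) * u + Ji - P * u * S) <= - α * u ^ 2 + Ku ^ 2 / α.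
Proof.
  intros Ha Hk He HP HS HK Hα Hα0. subst α.
  assert (H1 : u * (Sw + Ji) <= Rabs u * Ku).
  { eapply Rle_trans; [apply Rle_abs|]. rewrite Rabs_mult. apply Rmult_le_compat_l; [apply Rabs_pos|].
    eapply Rle_trans; [apply Rabs_triang|lra]. }
  assert (H2 : 0 <= k * eta * rho ^ 2 * u ^ 2) by (apply Rmult_le_pos; [apply Rmult_le_pos; [nra|]|]; nra).
  assert (H3 : 0 <= P * u ^ 2 * S) by (apply Rmult_le_pos; [|auto]; nra).
  assert (H4 : ai * u ^ 2 >= amin * u ^ 2) by nra.
  pose proof (amgm (Rabs u) Ku (amin - k) Hα0) as H7. rewrite abs_sq in H7.
  assert (E : 2 * u * (- ai * u + Sw + k * (1 - eta * rho ^ 2) * u + Ji - P * u * S)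
     = -2 * ai * u^2 + 2 * (u * (Sw + Ji)) + 2 * k * u ^ 2 - 2 * (k * eta * rho ^ 2 * u ^ 2) - 2 * (P * u ^ 2 * S)) by ring.
  rewrite E. nra.
Qed.

Lemma Gam_pos r V s : 0 < Gam r V s.
Proof. unfold Gam. pose proof (exp_pos (- r * (s - V))). apply Rdiv_lt_0_compat; lra. Qed.

Lemma rterm p g2 rho gm u : 0 < p -> gm ^ 2 <= g2 ->
  2 * rho * (gm * u) <= / p * g2 * u ^ 2 + p * rho ^ 2.
Proof.
  intros Hp Hg. assert (0 <= (p * rho - gm * u) ^ 2 / p) by (apply Rdiv_le_0_compat; [apply pow2_ge_0|lra]).
  replace ((p * rho - gm * u) ^ 2 / p) with (p * rho ^ 2 - 2 * rho * (gm * u) + / p * (gm ^ 2 * u ^ 2)) in H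
    by (field; lra).
  assert (gm ^ 2 * u ^ 2 <= g2 * u ^ 2) by (apply Rmult_le_compat_r; [apply pow2_ge_0|auto]).
  assert (/ p * (gm ^ 2 * u ^ 2) <= / p * (g2 * u ^ 2)).
  { apply Rmult_le_compat_l; auto. left; apply Rinv_0_lt_compat; auto. }
  lra.
Qed.

Lemma Sw_bound m (w : nat -> nat -> R) (f : nat -> R -> R) (x : nat -> R) W beta i :
  (i < m)%nat ->
  (forall i s, (i<m)%nat -> Rabs (f i s) <= beta) ->
  (forall i j, (i<m)%nat -> (j<m)%nat -> Rabs (w i j) <= W) ->
  Rabs (sumi m (fun j => w i j * f j (x j))) <= INR m * W * beta.
Proof.
  intros Hi Hf Hw. eapply Rle_trans; [apply sumi_abs|].
  replace (INR m * W * beta) with (INR m * (W * beta)) by ring. rewrite <- sumi_const.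
  apply sumi_le. intros j Hj. rewrite Rabs_mult. apply Rmult_le_compat; auto using Rabs_pos.
Qed.

Lemma sq_le_abs x Q : x ^ 2 <= Q -> Rabs x <= sqrt Q.
Proof.
  intros H. rewrite <- sqrt_Rsqr_abs. apply sqrt_le_1_alt. unfold Rsqr. simpl in H. lra.
Qed.

Lemma absorb (m : nat) a w f phi k J P r V gam b beta eta u rho amin W Jm gam2 Q :
  (1 <= m)%nat -> 0 < P -> 0 < b -> 0 < k ->
  (forall i, (i<m)%nat -> 0 < eta i) -> (forall i, (i<m)%nat -> amin <= a i) -> k < amin ->
  (forall i s, (i<m)%nat -> Rabs (f i s) <= beta) ->
  (forall i s, (i<m)%nat -> phi i s = 1 - eta i * s ^ 2) ->
  (forall i j, (i<m)%nat -> (j<m)%nat -> Rabs (w i j) <= W) ->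
  (forall i, (i<m)%nat -> Rabs (J i) <= Jm) ->
  (forall i, (i<m)%nat -> gam i ^ 2 <= gam2) ->
  1 + INR m * (INR m * W * beta + Jm) ^ 2 / (amin - k) ^ 2 * (1 + INR m * gam2 / b ^ 2) <= Q ->
  is_solution m a w f phi k J P r V gam b u rho ->
  exists T, 0 < T /\ forall t, T <= t ->
    (forall l, (l<m)%nat -> Rabs (u l t) <= sqrt Q) /\ rho t ^ 2 <= Q.
Proof.
  intros Hm HP Hb Hk Heta Ha Hka Hf Hphi Hw HJ Hg HQ Hsol.
  set (α := amin - k) in *. set (Ku := INR m * W * beta + Jm) in *.
  set (Y := INR m * Ku ^ 2 / α ^ 2) in *. set (G := 1 + INR m * gam2 / b ^ 2) in *.
  assert (Hα : 0 < α) by (unfold α; lra).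
  assert (Hmp : 0 < INR m) by (apply lt_0_INR; lia).
  assert (Hg2 : 0 <= gam2) by (eapply Rle_trans; [apply (pow2_ge_0 (gam 0%nat))| apply Hg; lia]).
  assert (HG : 1 <= G).
  { unfold G. assert (0 <= INR m * gam2 / b ^ 2); [|lra].
    apply Rdiv_le_0_compat; [apply Rmult_le_pos; lra| apply pow_lt; lra]. }
  assert (HY : 0 <= Y).
  { unfold Y. apply Rdiv_le_0_compat; [apply Rmult_le_pos; [lra| apply pow2_ge_0]| apply pow_lt; lra]. }
  set (δ := / (2 * G)).
  assert (Hδ : 0 < δ) by (unfold δ; apply Rinv_0_lt_compat; lra).
  assert (HGδ : G * δ = / 2) by (unfold δ; field; lra).
  set (d := fun i s => - a i * u i s + sumi m (fun j => w i j * f j (u j s))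
           + k * phi i (rho s) * u i s + J i - P * u i s * sumi m (fun j => Gam r V (u j s))).
  set (y := fun s => sumi m (fun i => u i s ^ 2)).
  set (y' := fun s => sumi m (fun i => 2 * u i s * d i s)).
  assert (Hyd : forall s, 1 <= s -> derivable_pt_lim y s (y' s)).
  { intros s Hs. unfold y, y'. apply (sumi_deriv m (fun i s => u i s ^ 2)).
    intros i Hi. apply sq_deriv. apply (proj1 (Hsol s ltac:(lra)) i Hi). }
  assert (Hyb : forall s, 1 <= s -> y' s <= - α * y s + INR m * (Ku ^ 2 / α)).
  { intros s Hs. unfold y, y'. rewrite <- sumi_lin. apply sumi_le. intros i Hi. unfold d.
    rewrite Hphi by auto. apply uterm with (amin := amin); auto.
    - left; auto.
    - lra.
    - rewrite <- (Rmult_0_r (INR m)), <- sumi_const. apply sumi_le. intros; left; apply Gam_pos.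
    - unfold Ku. apply Rplus_le_compat; auto. apply Sw_bound; auto. }
  pose proof (compare y y' α _ 1 Hα Hyd Hyb) as Hy.
  assert (EY : INR m * (Ku ^ 2 / α) / α = Y) by (unfold Y; field; lra).
  rewrite EY in Hy.
  destruct (eventually_small α (Rabs (y 1 - Y)) δ Hα (Rabs_pos _) Hδ) as [T0 [HT0 HT0']].
  set (T1 := 1 + T0).
  assert (HyT : forall t, T1 <= t -> y t <= Y + δ).
  { intros t Ht. unfold T1 in Ht. pose proof (Hy t ltac:(lra)). pose proof (HT0' (t - 1) ltac:(lra)).
    pose proof (exp_pos (- α * (t - 1))).
    assert (exp (- α * (t - 1)) * (y 1 - Y) <= exp (- α * (t - 1)) * Rabs (y 1 - Y))
      by (apply Rmult_le_compat_l; [lra| apply Rle_abs]). lra. }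
  set (z := fun s => rho s ^ 2).
  set (z' := fun s => 2 * rho s * (sumi m (fun i => gam i * u i s) - b * rho s)).
  set (c := INR m / b * gam2 * (Y + δ)).
  assert (Hzd : forall s, T1 <= s -> derivable_pt_lim z s (z' s)).
  { intros s Hs. unfold z, z'. apply sq_deriv. apply (proj2 (Hsol s ltac:(unfold T1 in Hs; lra))). }
  assert (Hzb : forall s, T1 <= s -> z' s <= - b * z s + c).
  { intros s Hs. unfold z', z, c.
    assert (E1 : 2 * rho s * (sumi m (fun i => gam i * u i s) - b * rho s)
       = sumi m (fun i => (2 * rho s) * (gam i * u i s)) - 2 * b * rho s ^ 2)
      by (rewrite sumi_scal; ring).
    rewrite E1.
    assert (H1 : sumi m (fun i => (2 * rho s) * (gam i * u i s)) <=
               sumi m (fun i => (INR m / b * gam2) * u i s ^ 2 + b / INR m * rho s ^ 2)).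
    { apply sumi_le. intros i Hi.
      replace (INR m / b) with (/ (b / INR m)) by (field; lra).
      replace (2 * rho s * (gam i * u i s)) with (2 * rho s * (gam i * u i s)) by ring.
      apply rterm; auto. apply Rdiv_lt_0_compat; lra. }
    rewrite sumi_lin in H1.
    replace (INR m * (b / INR m * rho s ^ 2)) with (b * rho s ^ 2) in H1 by (field; lra).
    pose proof (HyT s Hs) as H2. unfold y in H2.
    assert (0 <= INR m / b * gam2) by (apply Rmult_le_pos; [apply Rdiv_le_0_compat|]; lra).
    assert (INR m / b * gam2 * sumi m (fun i => u i s ^ 2) <= INR m / b * gam2 * (Y + δ))
      by (apply Rmult_le_compat_l; auto).
    lra. }
  pose proof (compare z z' b c T1 Hb Hzd Hzb) as Hz.
  destruct (eventually_small b (Rabs (z T1 - c / b)) δ Hb (Rabs_pos _) Hδ) as [T2 [HT2 HT2']].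
  exists (T1 + T2). split; [unfold T1; lra|].
  intros t Ht.
  assert (Hzt : z t <= c / b + δ).
  { pose proof (Hz t ltac:(lra)). pose proof (HT2' (t - T1) ltac:(lra)).
    pose proof (exp_pos (- b * (t - T1))).
    assert (exp (- b * (t - T1)) * (z T1 - c / b) <= exp (- b * (t - T1)) * Rabs (z T1 - c / b))
      by (apply Rmult_le_compat_l; [lra| apply Rle_abs]). lra. }
  assert (Ec : c / b = (G - 1) * (Y + δ)) by (unfold c, G; field; lra).
  assert (HyQ : y t <= Q).
  { pose proof (HyT t ltac:(lra)). assert (Y <= Y * G) by nra. assert (δ <= / 2) by nra. lra. }
  split.
  - intros l Hl. apply sq_le_abs. eapply Rle_trans; [|exact HyQ]. unfold y.
    apply (sumi_ge_term m (fun i => u i t ^ 2)); auto. intros; apply pow2_ge_0.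
  - unfold z in Hzt. rewrite Ec in Hzt. nra.
Qed.

Lemma diffterm ai aj amin k etai etaj rho ui uj Swi Swj Ji Jj P S Smin Q sqQ
  astar Wsb etastar Jstar μ K :
  amin <= ai -> 0 < k -> 0 <= etai -> 0 <= P -> Smin <= S ->
  Rabs (ai - aj) <= astar -> Rabs (Swi - Swj) <= Wsb -> Rabs (etai - etaj) <= etastar ->
  Rabs (Ji - Jj) <= Jstar -> Rabs uj <= sqQ -> rho ^ 2 <= Q ->
  μ = amin - k + P * Smin -> 0 < μ ->
  K = Wsb + astar * sqQ + k * etastar * (Q * sqQ) + Jstar ->
  2 * (ui - uj) * ((- ai * ui + Swi + k * (1 - etai * rho ^ 2) * ui + Ji - P * ui * S)
                 - (- aj * uj + Swj + k * (1 - etaj * rho ^ 2) * uj + Jj - P * uj * S))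
  <= - μ * (ui - uj) ^ 2 + K ^ 2 / μ.
Proof.
  intros Ha Hk He HP HS Hda Hdw Hde HdJ Hu Hr Hμ Hμp HK.
  set (U := ui - uj).
  set (Rr := - (ai - aj) * uj + (Swi - Swj) - k * rho ^ 2 * (etai - etaj) * uj + (Ji - Jj)).
  assert (E : (- ai * ui + Swi + k * (1 - etai * rho ^ 2) * ui + Ji - P * ui * S)
                 - (- aj * uj + Swj + k * (1 - etaj * rho ^ 2) * uj + Jj - P * uj * S)
              = - (ai - k) * U - k * etai * rho ^ 2 * U - P * S * U + Rr) by (unfold U, Rr; ring).
  rewrite E.
  assert (Hq0 : 0 <= sqQ) by (eapply Rle_trans; [apply Rabs_pos|exact Hu]).
  assert (Hrr : Rabs Rr <= K).
  { unfold Rr. rewrite HK.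
    assert (A1 : Rabs (- (ai - aj) * uj) <= astar * sqQ).
    { rewrite Rabs_mult, Rabs_Ropp. apply Rmult_le_compat; auto using Rabs_pos. }
    assert (A2 : Rabs (k * rho ^ 2 * (etai - etaj) * uj) <= k * etastar * (Q * sqQ)).
    { rewrite !Rabs_mult. rewrite (Rabs_right k) by lra. rewrite (Rabs_right (rho ^ 2)) by (apply Rle_ge, pow2_ge_0).
      assert (B1 : Rabs (etai - etaj) * Rabs uj <= etastar * sqQ) by (apply Rmult_le_compat; auto using Rabs_pos).
      assert (B2 : rho ^ 2 * (Rabs (etai - etaj) * Rabs uj) <= Q * (etastar * sqQ)).
      { apply Rmult_le_compat; auto using pow2_ge_0. apply Rmult_le_pos; apply Rabs_pos. }
      replace (k * rho ^ 2 * Rabs (etai - etaj) * Rabs uj) with (k * (rho ^ 2 * (Rabs (etai - etaj) * Rabs uj))) by ring.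
      replace (k * etastar * (Q * sqQ)) with (k * (Q * (etastar * sqQ))) by ring.
      apply Rmult_le_compat_l; lra. }
    set (X1 := - (ai - aj) * uj) in *. set (X3 := k * rho ^ 2 * (etai - etaj) * uj) in *.
    assert (T1 := Rabs_triang (X1 + (Swi - Swj) - X3) (Ji - Jj)).
    assert (T2 : Rabs (X1 + (Swi - Swj) - X3) <= Rabs (X1 + (Swi - Swj)) + Rabs X3)
      by (unfold Rminus at 1; rewrite <- (Rabs_Ropp X3); apply Rabs_triang).
    assert (T3 := Rabs_triang X1 (Swi - Swj)). lra. }
  assert (H1 : U * Rr <= Rabs U * K).
  { eapply Rle_trans; [apply Rle_abs|]. rewrite Rabs_mult. apply Rmult_le_compat_l; auto using Rabs_pos. }
  assert (H2 : 0 <= k * etai * rho ^ 2 * U ^ 2) by (apply Rmult_le_pos; [apply Rmult_le_pos; [nra|apply pow2_ge_0]|apply pow2_ge_0]).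
  assert (H3 : P * Smin * U ^ 2 <= P * S * U ^ 2).
  { apply Rmult_le_compat_r; [apply pow2_ge_0|]. apply Rmult_le_compat_l; auto. }
  assert (H4 : ai * U ^ 2 >= amin * U ^ 2) by (pose proof (pow2_ge_0 U); nra).
  pose proof (amgm (Rabs U) K μ Hμp) as H5. rewrite abs_sq in H5.
  assert (E2 : 2 * U * (- (ai - k) * U - k * etai * rho ^ 2 * U - P * S * U + Rr)
     = -2 * ai * U ^ 2 + 2 * k * U ^ 2 - 2 * (k * etai * rho ^ 2 * U ^ 2) - 2 * (P * S * U ^ 2) + 2 * (U * Rr)) by ring.
  rewrite E2. rewrite Hμ in *. nra.
Qed.

Lemma mini_gt m g c : (forall i, (i < m)%nat -> c < g i) -> (0 < m)%nat -> c < mini m g.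
Proof.
  intros H Hm. unfold mini. assert (H0 : c < g 0%nat) by (apply H; lia).
  assert (H' : forall i, In i (seq 0 m) -> c < g i) by (intros i Hi; apply H; apply in_seq in Hi; lia).
  clear H. induction (seq 0 m) as [|x l IH]; simpl; auto.
  apply Rmin_glb_lt; [apply H'; simpl; auto| apply IH; intros; apply H'; simpl; auto].
Qed.

Lemma Gam_lb r V Q x : 0 < r -> Rabs x <= sqrt Q ->
  / (1 + exp (r * (sqrt Q + Rabs V))) <= Gam r V x.
Proof.
  intros Hr Hx. unfold Gam, Rdiv. rewrite Rmult_1_l.
  apply Rinv_le_contravar; [pose proof (exp_pos (- r * (x - V))); lra|].
  apply Rplus_le_compat_l, exp_le'.
  assert (- x <= sqrt Q) by (pose proof (Rabs_maj2 x); lra).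
  assert (V <= Rabs V) by apply Rle_abs. nra.
Qed.

Lemma Sw_diff_bound m (w : nat -> nat -> R) (f : nat -> R -> R) (x : nat -> R) Wst beta i j :
  (forall i s, (i<m)%nat -> Rabs (f i s) <= beta) ->
  (forall l, (l<m)%nat -> Rabs (w i l - w j l) <= Wst) ->
  Rabs (sumi m (fun l => w i l * f l (x l)) - sumi m (fun l => w j l * f l (x l))) <= INR m * Wst * beta.
Proof.
  intros Hf Hw. rewrite sumi_minus. eapply Rle_trans; [apply sumi_abs|].
  replace (INR m * Wst * beta) with (INR m * (Wst * beta)) by ring. rewrite <- sumi_const.
  apply sumi_le. intros l Hl. replace (w i l * f l (x l) - w j l * f l (x l)) with ((w i l - w j l) * f l (x l)) by ring.
  rewrite Rabs_mult. apply Rmult_le_compat; auto using Rabs_pos.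
Qed.

Theorem theorem3p1
  (m : nat) (a : nat -> R) (w : nat -> nat -> R) (f phi : nat -> R -> R)
  (k : R) (J : nat -> R) (P r V : R) (gam : nat -> R) (b beta : R)
  (eta : nat -> R) (eps : R) :
  (2 <= m)%nat ->
  0 < r -> 0 < P -> 0 < b -> 0 < beta -> 0 < k ->
  (forall i, (i < m)%nat -> 0 < a i) ->
  (forall i, (i < m)%nat -> 0 < eta i) ->
  (forall i, (i < m)%nat -> k < a i) ->
  (forall i, (i < m)%nat -> locally_lipschitz (f i)) ->
  (forall i, (i < m)%nat -> locally_lipschitz (phi i)) ->
  (forall i s, (i < m)%nat -> Rabs (f i s) <= beta) ->
  (forall i s, (i < m)%nat -> phi i s = 1 - eta i * s ^ 2) ->
  0 < eps ->
  let amin := mini m a in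
  let W := maxi m (fun i => maxi m (fun j => Rabs (w i j))) in
  let Jm := maxi m (fun i => Rabs (J i)) in
  let gam2 := maxi m (fun i => gam i ^ 2) in
  let C1 := / (amin - k) * (INR m * gam2 / b + b) in
  let C2 := (INR m * gam2 / b + b) * (INR m * (INR m * W * beta + Jm) ^ 2 / (amin - k) ^ 2) in
  let mu0 := b * Rmin (/ C1) 1 in
  let Q := 1 + C2 / (mu0 * Rmin C1 1) in
  let astar := maxi m (fun i => maxi m (fun j => Rabs (a i - a j))) in
  let Wstar := maxi m (fun i => maxi m (fun j => maxi m (fun l => Rabs (w i l - w j l)))) in
  let etastar := maxi m (fun i => maxi m (fun j => Rabs (eta i - eta j))) in
  let Jstar := maxi m (fun i => maxi m (fun j => Rabs (J i - J j))) in
  let E := 1 + exp (r * (sqrt Q + Rabs V)) in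
  let Pstar := / (INR m * eps) *
      (INR m * Wstar * beta + astar * sqrt Q + k * etastar * (Q * sqrt Q) + Jstar) * E in
  let mu := (amin - k) + INR m * P / E in
  Pstar < P ->
  (* approximate synchronization: sup over initial states of
     max_{i<j} limsup |u_i - u_j| is < eps *)
  (exists D : R, D < eps /\
     forall (u : nat -> R -> R) (rho : R -> R),
       is_solution m a w f phi k J P r V gam b u rho ->
       forall i j : nat, (i < j)%nat -> (j < m)%nat ->
         Rbar_le (limsup_infty (fun t => Rabs (u i t - u j t))) (Finite D)) /\
  (* uniform exponential rate mu(P) > 0 *)
  0 < mu /\
  (exists D : R, D < eps /\
     forall (u : nat -> R -> R) (rho : R -> R),
       is_solution m a w f phi k J P r V gam b u rho ->
       exists T : R, 0 <= T /\
         forall t : R, T < t ->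
         forall i j : nat, (i < m)%nat -> (j < m)%nat -> i <> j ->
           (u i t - u j t) ^ 2 <= exp (- mu * (t - T)) * (u i T - u j T) ^ 2 + D ^ 2).
Proof.
  intros Hm Hr HP Hb Hbeta Hk Ha Heta Hka Hfl Hphil Hf Hphi Heps amin W Jm gam2 C1 C2 mu0 Q
    astar Wstar etastar Jstar E Pstar mu HPs.
  assert (Hm0 : (0 < m)%nat) by lia.
  assert (Hmp : 0 < INR m) by (apply lt_0_INR; lia).
  assert (Hamin : forall i, (i < m)%nat -> amin <= a i) by (intros; apply mini_le; auto).
  assert (Hka' : k < amin) by (apply mini_gt; auto).
  assert (HW : forall i j, (i<m)%nat -> (j<m)%nat -> Rabs (w i j) <= W).
  { intros i j Hi Hj. eapply Rle_trans; [apply (maxi_ge m (fun j => Rabs (w i j))); auto|].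
    apply (maxi_ge m (fun i => maxi m (fun j => Rabs (w i j)))); auto. }
  assert (HJ : forall i, (i<m)%nat -> Rabs (J i) <= Jm) by (intros; apply (maxi_ge m (fun i => Rabs (J i))); auto).
  assert (Hg : forall i, (i<m)%nat -> gam i ^ 2 <= gam2) by (intros; apply (maxi_ge m (fun i => gam i ^ 2)); auto).
  assert (Hg2 : 0 <= gam2) by (eapply Rle_trans; [apply (pow2_ge_0 (gam 0%nat))| apply Hg; lia]).
  set (Y := INR m * (INR m * W * beta + Jm) ^ 2 / (amin - k) ^ 2).
  set (G := 1 + INR m * gam2 / b ^ 2).
  assert (HY : 0 <= Y).
  { unfold Y. apply Rdiv_le_0_compat; [apply Rmult_le_pos; [lra| apply pow2_ge_0]| apply pow_lt; lra]. }
  assert (HG : 1 <= G).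
  { unfold G. assert (0 <= INR m * gam2 / b ^ 2); [|lra].
    apply Rdiv_le_0_compat; [apply Rmult_le_pos; lra| apply pow_lt; lra]. }
  assert (HC1 : 0 < C1).
  { unfold C1. apply Rmult_lt_0_compat; [apply Rinv_0_lt_compat; lra|].
    assert (0 <= INR m * gam2 / b) by (apply Rdiv_le_0_compat; [apply Rmult_le_pos|]; lra). lra. }
  assert (EC2 : C2 = b * (G * Y)) by (unfold C2, G, Y; field; lra).
  assert (HQ : 1 + Y * G <= Q).
  { unfold Q, mu0. rewrite EC2.
    set (p1 := Rmin (/ C1) 1). set (p2 := Rmin C1 1).
    assert (0 < p1 <= 1) by (unfold p1; split; [apply Rmin_glb_lt; [apply Rinv_0_lt_compat|]; lra| apply Rmin_r]).
    assert (0 < p2 <= 1) by (unfold p2; split; [apply Rmin_glb_lt; lra| apply Rmin_r]).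
    assert (0 < p1 * p2 <= 1) by (split; [apply Rmult_lt_0_compat; lra| nra]).
    replace (b * (G * Y) / (b * p1 * p2)) with ((G * Y) / (p1 * p2)) by (field; lra).
    assert (G * Y <= G * Y / (p1 * p2)).
    { apply (Rmult_le_reg_r (p1 * p2)); [lra|].
      replace (G * Y / (p1 * p2) * (p1 * p2)) with (G * Y) by (field; lra).
      assert (0 <= G * Y) by nra. nra. }
    lra. }
  assert (HQ1 : 1 <= Q) by nra.
  assert (HsQ : 0 <= sqrt Q) by apply sqrt_pos.
  assert (HE : 0 < E) by (unfold E; pose proof (exp_pos (r * (sqrt Q + Rabs V))); lra).
  assert (Hmu : 0 < mu).
  { unfold mu. assert (0 < INR m * P / E) by (apply Rdiv_lt_0_compat; [apply Rmult_lt_0_compat|]; lra). lra. }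
  set (K := INR m * Wstar * beta + astar * sqrt Q + k * etastar * (Q * sqrt Q) + Jstar).
  assert (Hmx0 : forall g : nat -> nat -> R, (forall i j, 0 <= g i j) -> 0 <= maxi m (fun i => maxi m (fun j => g i j))).
  { intros g Hg0. eapply Rle_trans; [apply (Hg0 0%nat 0%nat)|].
    eapply Rle_trans; [apply (maxi_ge m (fun j => g 0%nat j)); auto|].
    apply (maxi_ge m (fun i => maxi m (fun j => g i j))); auto. }
  assert (Hast : 0 <= astar) by (apply Hmx0; intros; apply Rabs_pos).
  assert (Hest : 0 <= etastar) by (apply Hmx0; intros; apply Rabs_pos).
  assert (HJst : 0 <= Jstar) by (apply Hmx0; intros; apply Rabs_pos).
  assert (HWst : 0 <= Wstar).
  { apply Hmx0; intros. eapply Rle_trans; [apply (Rabs_pos (w i 0%nat - w j 0%nat))|].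
    apply (maxi_ge m (fun l => Rabs (w i l - w j l))); auto. }
  assert (HK : 0 <= K).
  { unfold K. assert (0 <= INR m * Wstar * beta) by (apply Rmult_le_pos; [apply Rmult_le_pos|]; lra).
    assert (0 <= astar * sqrt Q) by (apply Rmult_le_pos; lra).
    assert (0 <= k * etastar * (Q * sqrt Q)) by (apply Rmult_le_pos; [apply Rmult_le_pos|apply Rmult_le_pos]; lra).
    lra. }
  set (Dd := K / mu).
  assert (HD0 : 0 <= Dd) by (apply Rdiv_le_0_compat; lra).
  assert (HDe : Dd < eps).
  { assert (H1 : Dd * mu = K) by (unfold Dd; field; lra).
    assert (H2 : Dd * (INR m * P / E) <= K).
    { rewrite <- H1. apply Rmult_le_compat_l; auto. unfold mu. lra. }
    assert (H3 : K * E < P * (INR m * eps)).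
    { unfold Pstar in HPs. fold K in HPs.
      apply (Rmult_lt_compat_l (INR m * eps)) in HPs; [|apply Rmult_lt_0_compat; lra].
      replace (INR m * eps * (/ (INR m * eps) * K * E)) with (K * E) in HPs by (field; lra). lra. }
    assert (H4 : Dd * (INR m * P) <= K * E).
    { replace (Dd * (INR m * P)) with (Dd * (INR m * P / E) * E) by (field; lra).
      apply Rmult_le_compat_r; lra. }
    assert (Dd * (INR m * P) < eps * (INR m * P)) by nra.
    apply (Rmult_lt_reg_r (INR m * P)); [apply Rmult_lt_0_compat|]; lra. }
  assert (Core : forall u rho, is_solution m a w f phi k J P r V gam b u rho ->
    exists T, 0 < T /\ forall t, T <= t -> forall i j, (i<m)%nat -> (j<m)%nat ->
      (u i t - u j t) ^ 2 <= exp (- mu * (t - T)) * (u i T - u j T) ^ 2 + Dd ^ 2).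
  { intros u rho Hsol.
    destruct (absorb m a w f phi k J P r V gam b beta eta u rho amin W Jm gam2 Q
      ltac:(lia) HP Hb Hk Heta Hamin Hka' Hf Hphi HW HJ Hg HQ Hsol) as [T [HT HTb]].
    exists T. split; auto. intros t Ht i j Hi Hj.
    set (d := fun i s => - a i * u i s + sumi m (fun j => w i j * f j (u j s))
           + k * phi i (rho s) * u i s + J i - P * u i s * sumi m (fun j => Gam r V (u j s))).
    set (y := fun s => (u i s - u j s) ^ 2).
    set (y' := fun s => 2 * (u i s - u j s) * (d i s - d j s)).
    assert (Hyd : forall s, T <= s -> derivable_pt_lim y s (y' s)).
    { intros s Hs. unfold y, y'. apply (sq_deriv (fun s => u i s - u j s)).
      apply (derivable_pt_lim_minus (u i) (u j)).
      - apply (proj1 (Hsol s ltac:(lra)) i Hi).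
      - apply (proj1 (Hsol s ltac:(lra)) j Hj). }
    assert (Hyb : forall s, T <= s -> y' s <= - mu * y s + K ^ 2 / mu).
    { intros s Hs. destruct (HTb s Hs) as [Hu Hrho]. unfold y', y, d.
      rewrite !Hphi by auto.
      apply diffterm with (amin := amin) (Smin := INR m / E) (Q := Q) (sqQ := sqrt Q)
        (astar := astar) (Wsb := INR m * Wstar * beta) (etastar := etastar) (Jstar := Jstar); auto.
      - left; auto.
      - lra.
      - unfold Rdiv. rewrite <- sumi_const. apply sumi_le. intros l Hl. apply Gam_lb; auto.
      - eapply Rle_trans; [apply (maxi_ge m (fun j => Rabs (a i - a j))); auto|].
        apply (maxi_ge m (fun i => maxi m (fun j => Rabs (a i - a j)))); auto.
      - apply Sw_diff_bound; auto. intros l Hl.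
        eapply Rle_trans; [apply (maxi_ge m (fun l => Rabs (w i l - w j l))); auto|].
        eapply Rle_trans; [apply (maxi_ge m (fun j => maxi m (fun l => Rabs (w i l - w j l)))); auto|].
        apply (maxi_ge m (fun i => maxi m (fun j => maxi m (fun l => Rabs (w i l - w j l))))); auto.
      - eapply Rle_trans; [apply (maxi_ge m (fun j => Rabs (eta i - eta j))); auto|].
        apply (maxi_ge m (fun i => maxi m (fun j => Rabs (eta i - eta j)))); auto.
      - eapply Rle_trans; [apply (maxi_ge m (fun j => Rabs (J i - J j))); auto|].
        apply (maxi_ge m (fun i => maxi m (fun j => Rabs (J i - J j)))); auto.
      - unfold mu. field. lra. }
    pose proof (compare y y' mu _ T Hmu Hyd Hyb t Ht) as Hc.
    replace (K ^ 2 / mu / mu) with (Dd ^ 2) in Hc by (unfold Dd; field; lra).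
    unfold y in Hc. pose proof (exp_pos (- mu * (t - T))).
    assert (0 <= exp (- mu * (t - T)) * Dd ^ 2) by (apply Rmult_le_pos; [lra| apply pow2_ge_0]).
    lra. }
  split; [|split; [auto|]].
  - set (D1 := (Dd + eps) / 2).
    exists D1. split; [unfold D1; lra|].
    intros u rho Hsol i j Hij Hj.
    destruct (Core u rho Hsol) as [T [HT HTb]].
    assert (HD1 : Dd < D1) by (unfold D1; lra).
    destruct (eventually_small mu ((u i T - u j T) ^ 2) (D1 ^ 2 - Dd ^ 2) Hmu (pow2_ge_0 _)
      ltac:(nra)) as [T0 [HT0 HT0']].
    set (g := fun t => Rabs (u i t - u j t)).
    assert (Hg1 : forall t, T + T0 <= t -> g t <= D1).
    { intros t Ht. unfold g. pose proof (HTb t ltac:(lra) i j ltac:(lia) Hj).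
      pose proof (HT0' (t - T) ltac:(lra)).
      replace D1 with (sqrt (D1 ^ 2)) by (rewrite sqrt_pow2; unfold D1; lra).
      apply sq_le_abs. lra. }
    unfold limsup_infty. fold g.
    destruct (Glb_Rbar_correct (fun z => exists T, z = real (sup_from g T))) as [Hlb _].
    eapply Rbar_le_trans; [apply (Hlb (real (sup_from g (T + T0)))); exists (T + T0); auto|].
    destruct (Lub_Rbar_correct (fun y => exists t, T + T0 <= t /\ y = g t)) as [_ Hlub].
    assert (Hs : Rbar_le (sup_from g (T + T0)) (Finite D1)).
    { unfold sup_from. apply Hlub. intros x [t [Ht ->]]. simpl. apply Hg1; auto. }
    destruct (sup_from g (T + T0)) eqn:Es; simpl in *; auto; [contradiction| unfold D1; lra].
  - exists Dd. split; auto. intros u rho Hsol.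
    destruct (Core u rho Hsol) as [T [HT HTb]].
    exists T. split; [lra|]. intros t Ht i j Hi Hj _. apply HTb; auto; lra.
Qed.
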